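(* Let $M$ be a lcm-monoid. Then there exists a left $\mathscr{M}$-brace $(\mathcal{B},\oplus,\cdot)$ such that the monoid $(\mathcal{B},\cdot)$ is isomorphic to $M$. Furthermore, if $M$ is a Gaussian monoid, then there exist a left $\mathscr{M}$-brace $(\mathcal{B},\oplus,\cdot)$ and a right $\mathscr{M}$-brace $(\mathcal{B},+,\cdot)$ (on the same set $\mathcal{B}$ with the same multiplication $\cdot$) such that $(\mathcal{B},\cdot)$ is isomorphic to $M$.
   Context: For elements $a,g$ of a monoid $M$, $a$ is a left divisor of $g$ if $g=ab$ for some $b\in M$, and a right divisor of $g$ if $g=ba$ for some $b\in M$. A lcm (resp. gcd) with respect to left divisibility is a least common multiple (resp. greatest common divisor) for the preorder ''is a left divisor of''; similarly for right divisibility. An element $a\neq 1$ of $M$ is an atom if $a=bc$ implies $b=1$ or $c=1$; $M$ is atomic if it is generated by its atoms and every element is a finite product of atoms. A monoid $M$ is a lcm-monoid if (i) $1$ is the unique invertible element of $M$, (ii) $M$ is left cancellative, and (iii) every pair of elements of $M$ has a lcm with respect to left divisibility. A monoid $M$ is a Gaussian monoid if (i) $M$ is atomic, (ii) $M$ is cancellative (left and right), and (iii) every pair of elements of $M$ has a lcm and a gcd with respect to both left and right divisibility. A left $\mathscr{M}$-brace is a set $\mathcal{B}$ with two operations $\oplus$ and $\cdot$ such that $(\mathcal{B},\oplus)$ is a commutative monoid, $(\mathcal{B},\cdot)$ is a monoid, and for all $a,b,c\in\mathcal{B}$: $a\cdot(b\oplus c)=a\cdot b\oplus a\cdot c$.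 A right $\mathscr{M}$-brace is defined similarly, with the axiom $(a\oplus b)\cdot c=a\cdot c\oplus b\cdot c$ for all $a,b,c\in\mathcal{B}$ instead. *)

(* Defs.v *)
From Stdlib Require Import List.
Import ListNotations.

Section Monoids.
Context {T : Type}.

Definition is_monoid (op : T -> T -> T) (e : T) : Prop :=
  (forall x y z, op x (op y z) = op (op x y) z) /\
  (forall x, op e x = x) /\ (forall x, op x e = x).

Definition is_comm_monoid (op : T -> T -> T) (e : T) : Prop :=
  is_monoid op e /\ (forall x y, op x y = op y x).

Definition ldiv (op : T -> T -> T) (a g : T) : Prop := exists b, g = op a b.
Definition rdiv (op : T -> T -> T) (a g : T) : Prop := exists b, g = op b a.

Definition is_lcm_for (le : T -> T -> Prop) (a b m : T) : Prop :=
  le a m /\ le b m /\ (forall c, le a c -> le b c -> le m c).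
Definition is_gcd_for (le : T -> T -> Prop) (a b d : T) : Prop :=
  le d a /\ le d b /\ (forall c, le c a -> le c b -> le c d).

Definition invertible (op : T -> T -> T) (e x : T) : Prop :=
  exists y, op x y = e /\ op y x = e.

Definition left_cancellative (op : T -> T -> T) : Prop :=
  forall a b c, op a b = op a c -> b = c.
Definition right_cancellative (op : T -> T -> T) : Prop :=
  forall a b c, op b a = op c a -> b = c.

Definition is_atom (op : T -> T -> T) (e a : T) : Prop :=
  a <> e /\ (forall b c, a = op b c -> b = e \/ c = e).

Definition atomic (op : T -> T -> T) (e : T) : Prop :=
  forall x, exists s : list T,
    (forall a, In a s -> is_atom op e a) /\ x = fold_right op e s.

Definition lcm_monoid (op : T -> T -> T) (e : T) : Prop :=
  is_monoid op e /\
  (forall x, invertible op e x -> x = e) /\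
  left_cancellative op /\
  (forall a b, exists m, is_lcm_for (ldiv op) a b m).

Definition gaussian_monoid (op : T -> T -> T) (e : T) : Prop :=
  is_monoid op e /\
  atomic op e /\
  left_cancellative op /\ right_cancellative op /\
  (forall a b, exists m, is_lcm_for (ldiv op) a b m) /\
  (forall a b, exists d, is_gcd_for (ldiv op) a b d) /\
  (forall a b, exists m, is_lcm_for (rdiv op) a b m) /\
  (forall a b, exists d, is_gcd_for (rdiv op) a b d).

Definition left_Mbrace (oplus : T -> T -> T) (zero : T)
  (mul : T -> T -> T) (one : T) : Prop :=
  is_comm_monoid oplus zero /\ is_monoid mul one /\
  (forall a b c, mul a (oplus b c) = oplus (mul a b) (mul a c)).

Definition right_Mbrace (oplus : T -> T -> T) (zero : T)
  (mul : T -> T -> T) (one : T) : Prop :=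
  is_comm_monoid oplus zero /\ is_monoid mul one /\
  (forall a b c, mul (oplus a b) c = oplus (mul a c) (mul b c)).
End Monoids.

Definition monoid_iso {B M : Type} (mul : B -> B -> B) (one : B)
  (op : M -> M -> M) (e : M) (f : B -> M) : Prop :=
  (forall x y, f x = f y -> x = y) /\ (forall m, exists x, f x = m) /\
  (forall x y, f (mul x y) = op (f x) (f y)) /\ f one = e.

Definition monoid_isomorphic {B M : Type} (mul : B -> B -> B) (one : B)
  (op : M -> M -> M) (e : M) : Prop :=
  exists f : B -> M, monoid_iso mul one op e f.

(* Main.v *)
Require Import Defs.
From Stdlib Require Import ClassicalEpsilon.

Section Gen.
Context {M : Type} (le : M -> M -> Prop) (e : M)
  (refl : forall x, le x x)
  (trans : forall x y z, le x y -> le y z -> le x z)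
  (antisym : forall x y, le x y -> le y x -> x = y)
  (bot : forall x, le e x)
  (ex : forall a b, exists m, is_lcm_for le a b m).

Lemma lcm_unique a b m m' : is_lcm_for le a b m -> is_lcm_for le a b m' -> m = m'.
Proof.
  intros [H1 [H2 H3]] [H1' [H2' H3']]. apply antisym; auto.
Qed.

Lemma join_ex : exists j : M -> M -> M,
  is_comm_monoid j e /\ forall a b, is_lcm_for le a b (j a b).
Proof.
  exists (fun a b => proj1_sig (constructive_indefinite_description _ (ex a b))).
  set (j := fun a b => proj1_sig (constructive_indefinite_description _ (ex a b))).
  assert (Hj : forall a b, is_lcm_for le a b (j a b)).
  { intros a b. unfold j. exact (proj2_sig (constructive_indefinite_description _ (ex a b))). }
  split; [|exact Hj].
  split; [split; [|split]|].
  - intros x y z.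
    destruct (Hj y z) as [Ay [Az Ayz]].
    destruct (Hj x (j y z)) as [Bx [Byz Bc]].
    destruct (Hj x y) as [Cx [Cy Cxy]].
    apply (lcm_unique (j x y) z).
    + split; [|split].
      * apply Cxy; eauto.
      * eauto.
      * intros c H1 H2. apply Bc; eauto.
    + apply Hj.
  - intros x. apply (lcm_unique e x); [apply Hj|]. split; [|split]; auto.
  - intros x. apply (lcm_unique x e); [apply Hj|]. split; [|split]; auto.
  - intros x y. apply (lcm_unique x y); [apply Hj|].
    destruct (Hj y x) as [A [B C]]. split; [|split]; auto.
Qed.
End Gen.

Theorem theoremA (M : Type) (op : M -> M -> M) (e : M) :
  lcm_monoid op e ->
  (exists (B : Type) (oplus : B -> B -> B) (zero : B)
          (mul : B -> B -> B) (one : B),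
      left_Mbrace oplus zero mul one /\ monoid_isomorphic mul one op e) /\
  (gaussian_monoid op e ->
   exists (B : Type) (oplus : B -> B -> B) (zero : B)
          (plus : B -> B -> B) (zero' : B)
          (mul : B -> B -> B) (one : B),
      left_Mbrace oplus zero mul one /\ right_Mbrace plus zero' mul one /\
      monoid_isomorphic mul one op e).
Proof.
  intros [Hm [Hinv [Hlc Hlcm]]].
  pose proof Hm as Hm'. destruct Hm' as [Ha [Hl Hr]].
  assert (Iso : monoid_isomorphic op e op e).
  { exists (fun x => x). split; [|split; [|split]]; eauto. }
  assert (Ldanti : forall x y, ldiv op x y -> ldiv op y x -> x = y).
  { intros x y [u Hu] [v Hv].
    assert (Huv : op u v = e).
    { apply (Hlc x). rewrite Ha, <- Hu, <- Hv. auto. }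
    assert (Hvu : op v u = e).
    { apply (Hlc y). rewrite Ha, <- Hv, <- Hu. auto. }
    assert (Hu0 : u = e) by (apply Hinv; exists v; split; assumption).
    rewrite Hu, Hu0, Hr. reflexivity. }
  assert (LJ : exists j : M -> M -> M,
    is_comm_monoid j e /\ forall a b, is_lcm_for (ldiv op) a b (j a b)).
  { apply join_ex.
    - intros x. exists e. auto.
    - intros x y z [u ->] [v ->]. exists (op u v). auto.
    - exact Ldanti.
    - intros x. exists x. auto.
    - exact Hlcm. }
  destruct LJ as [j [Hjm Hj]].
  assert (LB : left_Mbrace j e op e).
  { split; [exact Hjm|split; [exact Hm|]].
    intros a b c.
    apply (lcm_unique (ldiv op) Ldanti (op a b) (op a c)); [|apply Hj].
    destruct (Hj b c) as [[u Hu] [[v Hv] Hbc]].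
    split; [|split].
    - exists u. rewrite Hu, Ha. auto.
    - exists v. rewrite Hv, Ha. auto.
    - intros c' [d Hd] [f Hf].
      rewrite <- Ha in Hd, Hf. rewrite Hd in Hf.
      apply Hlc in Hf.
      destruct (Hbc (op b d)) as [g Hg].
      + exists d. auto.
      + exists f. auto.
      + exists g. rewrite Hd, Hg, Ha. auto. }
  split.
  { exists M, j, e, op, e. auto. }
  intros [_ [_ [_ [Hrc [_ [_ [Hrlcm _]]]]]]].
  assert (Rdanti : forall x y, rdiv op x y -> rdiv op y x -> x = y).
  { intros x y [u Hu] [v Hv].
    assert (Huv : op u v = e).
    { apply (Hrc y). rewrite <- Ha, <- Hv, <- Hu. auto. }
    assert (Hvu : op v u = e).
    { apply (Hrc x). rewrite <- Ha, <- Hu, <- Hv. auto. }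
    assert (Hv0 : v = e) by (apply Hinv; exists u; split; assumption).
    rewrite Hv, Hv0, Hl. reflexivity. }
  assert (RJ : exists k : M -> M -> M,
    is_comm_monoid k e /\ forall a b, is_lcm_for (rdiv op) a b (k a b)).
  { apply join_ex.
    - intros x. exists e. auto.
    - intros x y z [u ->] [v ->]. exists (op v u). auto.
    - exact Rdanti.
    - intros x. exists x. auto.
    - exact Hrlcm. }
  destruct RJ as [k [Hkm Hk]].
  assert (RB : right_Mbrace k e op e).
  { split; [exact Hkm|split; [exact Hm|]].
    intros b c a.
    apply (lcm_unique (rdiv op) Rdanti (op b a) (op c a)); [|apply Hk].
    destruct (Hk b c) as [[u Hu] [[v Hv] Hbc]].
    split; [|split].
    - exists u. rewrite Hu, Ha. auto.
    - exists v. rewrite Hv, Ha. auto.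
    - intros c' [d Hd] [f Hf].
      rewrite Ha in Hd, Hf. rewrite Hd in Hf.
      apply Hrc in Hf.
      destruct (Hbc (op d b)) as [g Hg].
      + exists d. auto.
      + exists f. auto.
      + exists g. rewrite Hd, Hg, Ha. auto. }
  exists M, j, e, k, e, op, e. auto.
Qed.
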